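(* Consider $N$ agents in $\mathbb{R}^n$ with dynamics $\dot p_i=\sum_{k=1}^n u_{i,k}\,b_{i,k}$, $i=1,\ldots,N$, under the control law \[ u_{i,k}=\sqrt{\omega_{i,k}}\cos(\omega_{i,k}t+\varphi_{i,k})\,h_1(\psi_i(p))+\sqrt{\omega_{i,k}}\sin(\omega_{i,k}t+\varphi_{i,k})\,h_2(\psi_i(p)). \] For every initial condition $(t_0,p_0)\in\mathbb{R}\times\mathbb{R}^{nN}$, the closed-loop system has a unique solution defined on all of $\mathbb{R}$.
   Context: $G=(V,E)$ is an undirected graph with $V=\{1,\ldots,N\}$ and nonempty edge set $E$ of two-element subsets (edges written $ij$); $d_{ij}\geq0$ for $ij\in E$. For each $i$, $b_{i,1},\ldots,b_{i,n}$ is an orthonormal basis of $\mathbb{R}^n$. $\psi_i(p)=\frac14\sum_{j:\,ij\in E}(\|p_j-p_i\|^2-d_{ij}^2)^2$ for $p=(p_1,\ldots,p_N)\in\mathbb{R}^{nN}$. The $\omega_{i,k}$ are $nN$ pairwise distinct positive reals and $\varphi_{i,k}\in\mathbb{R}$. The functions $h_1,h_2:\mathbb{R}\to\mathbb{R}$ satisfy, for $\nu=1,2$: (i) $h_\nu(y)=0$ for $y\leq 0$; (ii) $h_\nu$ is bounded and of class $C^2$ on $(0,\infty)$; (iii) $h_\nu(y)/y$ remains bounded as $y\downarrow 0$; (iv) $h_\nu'(y)$ remains bounded as $y\downarrow0$; (v) $h_\nu''(y)\,y$ remains bounded as $y\downarrow 0$; (vi) there exist $r',c'>0$ with $h_2'(y)h_1(y)-h_1'(y)h_2(y)\leq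 -c'y$ for all $y\in(0,r']$. *)

(* Defs.v *)
From Stdlib Require Import Reals Lra List.
From Coquelicot Require Import Coquelicot.
Open Scope R_scope.

Definition sumR (m : nat) (f : nat -> R) : R :=
  fold_right (fun j acc => f j + acc) 0 (seq 0 m).

(* A configuration p = (p_1,...,p_N) in R^{nN}: p i a is the a-th coordinate
   of agent i (agents indexed 0..N-1, coordinates 0..n-1). *)
Definition config := nat -> nat -> R.

Definition dist2 (n : nat) (p : config) (i j : nat) : R :=
  sumR n (fun a => (p j a - p i a) ^ 2).

Definition psi (N n : nat) (E : nat -> nat -> bool) (d : nat -> nat -> R)
  (i : nat) (p : config) : R :=
  / 4 * sumR N (fun j => if E i j then (dist2 n p i j - d i j ^ 2) ^ 2 else 0).

Definition ctrl (N n : nat) (E : nat -> nat -> bool) (d : nat -> nat -> R)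
  (om ph : nat -> nat -> R) (h1 h2 : R -> R) (i k : nat) (t : R) (p : config) : R :=
  sqrt (om i k) * cos (om i k * t + ph i k) * h1 (psi N n E d i p)
  + sqrt (om i k) * sin (om i k * t + ph i k) * h2 (psi N n E d i p).

(* a-th coordinate of the closed-loop vector field for agent i:
   sum_k u_{i,k} b_{i,k}, where b i k a is the a-th coordinate of b_{i,k} *)
Definition field (N n : nat) (E : nat -> nat -> bool) (d : nat -> nat -> R)
  (b : nat -> nat -> nat -> R) (om ph : nat -> nat -> R) (h1 h2 : R -> R)
  (i a : nat) (t : R) (p : config) : R :=
  sumR n (fun k => ctrl N n E d om ph h1 h2 i k t p * b i k a).

Definition is_solution_on (N n : nat) (E : nat -> nat -> bool) (d : nat -> nat -> R)
  (b : nat -> nat -> nat -> R) (om ph : nat -> nat -> R) (h1 h2 : R -> R)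
  (lo hi : Rbar) (p : R -> config) : Prop :=
  forall t : R, Rbar_lt lo t -> Rbar_lt t hi ->
  forall i a, (i < N)%nat -> (a < n)%nat ->
    is_derive (fun s => p s i a) t (field N n E d b om ph h1 h2 i a t (p t)).

Definition admissible_h (h : R -> R) : Prop :=
  (forall y, y <= 0 -> h y = 0) /\
  (exists M, forall y, 0 < y -> Rabs (h y) <= M) /\
  (forall y, 0 < y ->
     ex_derive h y /\ ex_derive (Derive h) y /\ continuous (Derive (Derive h)) y) /\
  (exists M del, 0 < del /\ forall y, 0 < y < del -> Rabs (h y / y) <= M) /\
  (exists M del, 0 < del /\ forall y, 0 < y < del -> Rabs (Derive h y) <= M) /\
  (exists M del, 0 < del /\ forall y, 0 < y < del ->
     Rabs (Derive (Derive h) y * y) <= M).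

(* Main.v *)
Require Import Defs.
From Stdlib Require Import Reals Lra List Lia.
From Coquelicot Require Import Coquelicot.
Open Scope R_scope.


Lemma sumR_0 f : sumR 0 f = 0.
Proof. reflexivity. Qed.

Lemma sumR_S m f : sumR (S m) f = sumR m f + f m.
Proof.
  unfold sumR. rewrite seq_S, fold_right_app. simpl.
  generalize (seq 0 m). intro l. induction l as [|x l IH]; simpl; [lra|].
  rewrite IH. lra.
Qed.

Lemma sumR_ext m f g : (forall k, (k < m)%nat -> f k = g k) -> sumR m f = sumR m g.
Proof.
  induction m; intros H; [reflexivity|]. rewrite !sumR_S, IHm, H; auto; intros; apply H; lia.
Qed.

Lemma sumR_le m f g : (forall k, (k < m)%nat -> f k <= g k) -> sumR m f <= sumR m g.
Proof.
  induction m; intros H; [rewrite !sumR_0; lra|]. rewrite !sumR_S.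
  assert (sumR m f <= sumR m g) by (apply IHm; intros; apply H; lia).
  assert (f m <= g m) by (apply H; lia). lra.
Qed.

Lemma sumR_plus m f g : sumR m (fun k => f k + g k) = sumR m f + sumR m g.
Proof. induction m; [rewrite !sumR_0; lra|]. rewrite !sumR_S, IHm. lra. Qed.

Lemma sumR_minus m f g : sumR m (fun k => f k - g k) = sumR m f - sumR m g.
Proof. induction m; [rewrite !sumR_0; lra|]. rewrite !sumR_S, IHm. lra. Qed.

Lemma sumR_scal m c f : sumR m (fun k => c * f k) = c * sumR m f.
Proof. induction m; [rewrite !sumR_0; lra|]. rewrite !sumR_S, IHm. lra. Qed.

Lemma sumR_scal_r m c f : sumR m (fun k => f k * c) = sumR m f * c.
Proof. induction m; [rewrite !sumR_0; lra|]. rewrite !sumR_S, IHm. lra. Qed.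

Lemma sumR_const m c : sumR m (fun _ => c) = INR m * c.
Proof. induction m; [rewrite !sumR_0; simpl; lra|]. rewrite !sumR_S, IHm, S_INR. lra. Qed.

Lemma sumR_abs m f : Rabs (sumR m f) <= sumR m (fun k => Rabs (f k)).
Proof.
  induction m; [rewrite !sumR_0, Rabs_R0; lra|]. rewrite !sumR_S.
  eapply Rle_trans; [apply Rabs_triang|]. lra.
Qed.

Lemma sumR_nonneg m f : (forall k, (k < m)%nat -> 0 <= f k) -> 0 <= sumR m f.
Proof.
  intros H. rewrite <- (Rmult_0_r (INR m)), <- sumR_const. apply sumR_le. auto.
Qed.

Lemma sumR_term m f k : (forall k, (k < m)%nat -> 0 <= f k) -> (k < m)%nat -> f k <= sumR m f.
Proof.
  induction m; intros H Hk; [lia|]. rewrite sumR_S.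
  destruct (Nat.eq_dec k m) as [->|Hne].
  - assert (0 <= sumR m f) by (apply sumR_nonneg; intros; apply H; lia). lra.
  - assert (f k <= sumR m f) by (apply IHm; [intros; apply H; lia | lia]).
    assert (0 <= f m) by (apply H; lia). lra.
Qed.

Lemma fin_bound2 (N n : nat) (g : nat -> nat -> R) :
  exists C, 0 <= C /\ forall i a, (i < N)%nat -> (a < n)%nat -> g i a <= C.
Proof.
  exists (sumR N (fun i => sumR n (fun a => Rabs (g i a)))). split.
  - apply sumR_nonneg; intros; apply sumR_nonneg; intros; apply Rabs_pos.
  - intros i a Hi Ha. eapply Rle_trans; [apply Rle_abs|].
    eapply Rle_trans; [| apply (sumR_term N (fun i => sumR n (fun a => Rabs (g i a))) i)].
    + apply (sumR_term n (fun a => Rabs (g i a))); auto. intros; apply Rabs_pos.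
    + intros; apply sumR_nonneg; intros; apply Rabs_pos.
    + auto.
Qed.

Lemma fin_choice (I : nat) (P : nat -> R -> Prop) :
  (forall i L L', L <= L' -> P i L -> P i L') ->
  (forall i, (i < I)%nat -> exists L, 0 <= L /\ P i L) ->
  exists L, 0 <= L /\ forall i, (i < I)%nat -> P i L.
Proof.
  intros Hmono. induction I; intros H.
  - exists 0. split; [lra|]. intros; lia.
  - destruct IHI as [L1 [HL1 H1]]. { intros; apply H; lia. }
    destruct (H I) as [L2 [HL2 H2]]. lia.
    exists (Rmax L1 L2). split. { eapply Rle_trans; [apply HL1| apply Rmax_l]. }
    intros i Hi. destruct (Nat.eq_dec i I) as [->|Hne].
    + eapply Hmono; [apply Rmax_r| exact H2].
    + eapply Hmono; [apply Rmax_l| apply H1; lia].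
Qed.

Definition betw (a b u : R) := Rmin a b <= u <= Rmax a b.

Lemma betw_trans a s t u : betw a t s -> betw a s u -> betw a t u.
Proof. unfold betw, Rmin, Rmax. repeat destruct Rle_dec; lra. Qed.

Lemma betw_abs a s u : betw a s u -> Rabs (u - a) <= Rabs (s - a).
Proof. unfold betw, Rmin, Rmax. intros H. repeat destruct Rle_dec; unfold Rabs; repeat destruct Rcase_abs; lra. Qed.

Lemma betw_l a s : betw a s a.
Proof. unfold betw, Rmin, Rmax. repeat destruct Rle_dec; lra. Qed.
Lemma betw_r a s : betw a s s.
Proof. unfold betw, Rmin, Rmax. repeat destruct Rle_dec; lra. Qed.

Lemma cont_by_bound (g u : R -> R) t :
  (exists del, 0 < del /\ forall s, Rabs (s - t) < del -> Rabs (g s - g t) <= u s) ->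
  continuous u t -> u t = 0 -> continuous g t.
Proof.
  intros [del [Hdel Hb]] Hu Hu0.
  apply filterlim_locally. intros eps.
  pose proof (proj1 (filterlim_locally (F:=locally t) u (u t)) Hu eps) as Hu'.
  rewrite Hu0 in Hu'. destruct Hu' as [d1 Hd1].
  assert (Hpos : 0 < Rmin del d1) by (apply Rmin_pos; [lra | apply cond_pos]).
  exists (mkposreal _ Hpos). intros s Hs.
  change (Rabs (s - t) < Rmin del d1) in Hs.
  assert (Hs1 : Rabs (s - t) < del) by (eapply Rlt_le_trans; [exact Hs| apply Rmin_l]).
  assert (Hs2 : Rabs (s - t) < d1) by (eapply Rlt_le_trans; [exact Hs| apply Rmin_r]).
  specialize (Hd1 s Hs2). change (Rabs (u s - 0) < eps) in Hd1.
  change (Rabs (g s - g t) < eps). specialize (Hb s Hs1).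
  rewrite Rminus_0_r in Hd1. eapply Rle_lt_trans; [exact Hb|].
  eapply Rle_lt_trans; [apply Rle_abs| exact Hd1].
Qed.

Lemma lip_cont (g : R -> R) K t : (forall s, Rabs (g s - g t) <= K * Rabs (s - t)) -> continuous g t.
Proof.
  intros H. apply (cont_by_bound g (fun s => K * Rabs (s - t))).
  - exists 1. split; [lra|]. intros; auto.
  - apply (continuous_mult (K:=R_AbsRing) (fun _ => K) (fun s => Rabs (s - t))); [apply continuous_const|]. apply continuous_Rabs_comp.
    apply (continuous_minus (fun s => s) (fun _ => t)); [apply continuous_id| apply continuous_const].
  - rewrite Rminus_eq_0, Rabs_R0. ring.
Qed.

Lemma cont_sumR m (f : nat -> R -> R) t :
  (forall k, (k < m)%nat -> continuous (f k) t) -> continuous (fun s => sumR m (fun k => f k s)) t.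
Proof.
  induction m; intros H.
  - apply (continuous_ext (fun _ => 0)); [intros; reflexivity| apply continuous_const].
  - apply (continuous_ext (fun s => plus (sumR m (fun k => f k s)) (f m s))).
    { intros; rewrite sumR_S; reflexivity. }
    apply (continuous_plus (K:=R_AbsRing) (V:=R_NormedModule) (fun s => sumR m (fun k => f k s)) (f m)); [apply IHm; intros; apply H; lia| apply H; lia].
Qed.


Lemma ex_derive_cont (f : R -> R) x : ex_derive f x -> continuous f x.
Proof. intros H. apply (ex_derive_continuous (K:=R_AbsRing) (V:=R_NormedModule)). exact H. Qed.

Lemma ex_RInt_cont (f : R -> R) a b :
  (forall z, Rmin a b <= z <= Rmax a b -> continuous f z) -> ex_RInt f a b.
Proof. intros H. apply (ex_RInt_continuous (V:=R_CompleteNormedModule)). exact H. Qed.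

Lemma RInt_bound (g : R -> R) a b M :
  ex_RInt g a b -> (forall x, betw a b x -> Rabs (g x) <= M) -> Rabs (RInt g a b) <= M * Rabs (b - a).
Proof.
  intros Hex HM. destruct (Rle_dec a b) as [Hab|Hab].
  - rewrite (Rabs_pos_eq (b - a)) by lra. rewrite Rmult_comm. apply abs_RInt_le_const; auto.
    intros x Hx. apply HM. unfold betw, Rmin, Rmax. repeat destruct Rle_dec; lra.
  - rewrite <- (opp_RInt_swap g b a) by (apply ex_RInt_swap; auto).
    change (Rabs (- RInt g b a) <= M * Rabs (b - a)). rewrite Rabs_Ropp.
    rewrite (Rabs_left (b - a)) by lra. replace (- (b - a)) with (a - b) by ring.
    rewrite Rmult_comm. apply abs_RInt_le_const; [lra| apply ex_RInt_swap; auto|].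
    intros x Hx. apply HM. unfold betw, Rmin, Rmax. repeat destruct Rle_dec; lra.
Qed.

Lemma RInt_pow_fwd c a s m : a <= s ->
  RInt (fun u => c * (u - a) ^ m) a s = c * (s - a) ^ (S m) / INR (S m).
Proof.
  intros Has. apply is_RInt_unique.
  replace (c * (s - a) ^ S m / INR (S m)) with
    (minus (c * (s - a) ^ S m / INR (S m)) (c * (a - a) ^ S m / INR (S m))).
  2:{ rewrite Rminus_eq_0, pow_i by lia.
        change (c * (s - a) ^ S m / INR (S m) - c * 0 / INR (S m) = c * (s - a) ^ S m / INR (S m)).
        field. apply not_0_INR; lia. }
  apply (is_RInt_derive (fun u => c * (u - a) ^ S m / INR (S m))).
  - intros x _. auto_derive; auto. change (match m with 0%nat => 1 | S _ => INR m + 1 end) with (INR (S m)). unfold Rminus. field. apply not_0_INR; lia.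
  - intros x _. apply ex_derive_cont. auto_derive. auto.
Qed.

Lemma RInt_pow_bwd c a s m : s <= a ->
  RInt (fun u => c * (a - u) ^ m) s a = c * (a - s) ^ (S m) / INR (S m).
Proof.
  intros Has. apply is_RInt_unique.
  replace (c * (a - s) ^ S m / INR (S m)) with
    (minus (- c * (a - a) ^ S m / INR (S m)) (- c * (a - s) ^ S m / INR (S m))).
  2:{ rewrite Rminus_eq_0, pow_i by lia.
        change (- c * 0 / INR (S m) - - c * (a - s) ^ S m / INR (S m) = c * (a - s) ^ S m / INR (S m)).
        field. apply not_0_INR; lia. }
  apply (is_RInt_derive (fun u => - c * (a - u) ^ S m / INR (S m))).
  - intros x _. auto_derive; auto. change (match m with 0%nat => 1 | S _ => INR m + 1 end) with (INR (S m)). unfold Rminus. field. apply not_0_INR; lia.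
  - intros x _. apply ex_derive_cont. auto_derive. auto.
Qed.

Lemma RInt_powbound (g : R -> R) c a s m :
  ex_RInt g a s -> (forall u, betw a s u -> Rabs (g u) <= c * Rabs (u - a) ^ m) ->
  Rabs (RInt g a s) <= c * Rabs (s - a) ^ (S m) / INR (S m).
Proof.
  intros Hex Hb. destruct (Rle_dec a s) as [Has|Has].
  - rewrite (Rabs_pos_eq (s - a)) by lra. rewrite <- RInt_pow_fwd by auto.
    assert (Hb' : forall u, a < u < s -> Rabs (g u) <= c * (u - a) ^ m).
    { intros u Hu. rewrite <- (Rabs_pos_eq (u - a)) by lra. apply Hb.
      unfold betw, Rmin, Rmax. repeat destruct Rle_dec; lra. }
    assert (Hc : ex_RInt (fun u => c * (u - a) ^ m) a s).
    { apply ex_RInt_cont. intros z _. apply ex_derive_cont. auto_derive. auto. }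
    apply Rabs_le. split.
    + rewrite <- (RInt_opp (fun u => c * (u - a) ^ m)) by exact Hc.
      apply (RInt_le (fun x => - (c * (x - a) ^ m)) g); [exact Has| exact (ex_RInt_opp _ a s Hc)| exact Hex|].
      intros x Hx. specialize (Hb' x Hx). apply Rabs_le_between in Hb'. lra.
    + apply (RInt_le g (fun u => c * (u - a) ^ m)); [exact Has| exact Hex| exact Hc|].
      intros x Hx. specialize (Hb' x Hx). apply Rabs_le_between in Hb'. lra.
  - rewrite <- (opp_RInt_swap g s a) by (apply ex_RInt_swap; exact Hex).
    change (Rabs (- RInt g s a) <= c * Rabs (s - a) ^ S m / INR (S m)). rewrite Rabs_Ropp.
    rewrite (Rabs_left (s - a)) by lra. replace (- (s - a)) with (a - s) by ring.
    rewrite <- RInt_pow_bwd by lra.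
    assert (Hb' : forall u, s < u < a -> Rabs (g u) <= c * (a - u) ^ m).
    { intros u Hu. replace (a - u) with (Rabs (u - a)) by (rewrite Rabs_left; lra). apply Hb.
      unfold betw, Rmin, Rmax. repeat destruct Rle_dec; lra. }
    assert (Hc : ex_RInt (fun u => c * (a - u) ^ m) s a).
    { apply ex_RInt_cont. intros z _. apply ex_derive_cont. auto_derive. auto. }
    assert (Hex' : ex_RInt g s a) by (apply ex_RInt_swap; exact Hex).
    assert (Hsa : s <= a) by lra.
    apply Rabs_le. split.
    + rewrite <- (RInt_opp (fun u => c * (a - u) ^ m)) by exact Hc.
      apply (RInt_le (fun x => - (c * (a - x) ^ m)) g); [exact Hsa| exact (ex_RInt_opp _ s a Hc)| exact Hex'|].
      intros x Hx. specialize (Hb' x Hx). apply Rabs_le_between in Hb'. lra.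
    + apply (RInt_le g (fun u => c * (a - u) ^ m)); [exact Hsa| exact Hex'| exact Hc|].
      intros x Hx. specialize (Hb' x Hx). apply Rabs_le_between in Hb'. lra.
Qed.


Lemma tele (v w : nat -> R) k0 :
  (forall m, Rabs (v (S m) - v m) <= w m) ->
  (forall m, (k0 <= m)%nat -> w (S m) <= w m / 2) -> (forall m, 0 <= w m) ->
  forall p m, (k0 <= m)%nat -> Rabs (v (p + m)%nat - v m) <= 2 * w m - 2 * w (p + m)%nat.
Proof.
  intros H1 H2 H3. induction p; intros m Hm.
  - simpl. rewrite Rminus_eq_0, Rabs_R0. lra.
  - specialize (IHp m Hm). simpl.
    assert (Hs := H1 (p + m)%nat). assert (Hh := H2 (p + m)%nat ltac:(lia)).
    replace (v (S (p + m)) - v m) with ((v (S (p + m)) - v (p + m)%nat) + (v (p + m)%nat - v m)) by ring.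
    eapply Rle_trans; [apply Rabs_triang|]. lra.
Qed.

Lemma lim_le_const (u : nat -> R) (l M : R) : is_lim_seq u l -> (forall m, u m <= M) -> l <= M.
Proof.
  intros Hu Hm. assert (H := is_lim_seq_le u (fun _ => M) l M Hm Hu (is_lim_seq_const M)).
  exact H.
Qed.

Lemma cauchy_lim (v w : nat -> R) k0 :
  (forall m, Rabs (v (S m) - v m) <= w m) ->
  (forall m, (k0 <= m)%nat -> w (S m) <= w m / 2) -> (forall m, 0 <= w m) ->
  is_lim_seq w 0 ->
  exists l : R, is_lim_seq v l /\ forall m, (k0 <= m)%nat -> Rabs (l - v m) <= 2 * w m.
Proof.
  intros H1 H2 H3 Hw.
  assert (Ht : forall p m, (k0 <= m)%nat -> Rabs (v (p + m)%nat - v m) <= 2 * w m).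
  { intros p m Hm. assert (X := tele v w k0 H1 H2 H3 p m Hm). assert (Y := H3 (p + m)%nat). lra. }
  assert (Hc : ex_finite_lim_seq v).
  { apply ex_lim_seq_cauchy_corr. intros eps.
    apply is_lim_seq_Reals in Hw. destruct (Hw (eps / 8)) as [M0 HM0].
    { assert (X := cond_pos eps). lra. }
    exists (Nat.max k0 M0). intros p q Hp Hq.
    set (M := Nat.max k0 M0).
    assert (HwM : w M < eps / 8).
    { specialize (HM0 M ltac:(lia)). unfold R_dist in HM0. rewrite Rminus_0_r in HM0.
      eapply Rle_lt_trans; [apply Rle_abs| exact HM0]. }
    assert (A := Ht (p - M)%nat M ltac:(lia)). assert (B := Ht (q - M)%nat M ltac:(lia)).
    replace (p - M + M)%nat with p in A by lia. replace (q - M + M)%nat with q in B by lia.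
    replace (v p - v q) with ((v p - v M) - (v q - v M)) by ring.
    eapply Rle_lt_trans; [apply Rabs_triang|]. rewrite Rabs_Ropp.
    assert (X := cond_pos eps). lra. }
  destruct Hc as [l Hl]. exists l. split; [exact Hl|].
  intros m Hm.
  assert (Hs : is_lim_seq (fun p => Rabs (v (p + m)%nat - v m)) (Rabs (l - v m))).
  { apply (is_lim_seq_abs (fun p => v (p + m)%nat - v m) (l - v m)).
    apply is_lim_seq_minus'; [| apply is_lim_seq_const].
    apply (is_lim_seq_incr_n v m l). exact Hl. }
  apply (lim_le_const _ _ _ Hs). intros p. apply Ht; auto.
Qed.

Lemma le_lim0 (z C : R) (a : nat -> R) k0 :
  is_lim_seq a 0 -> (forall m, (k0 <= m)%nat -> z <= C * a m) -> z <= 0.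
Proof.
  intros Ha H.
  assert (Hs : is_lim_seq (fun m => C * a (m + k0)%nat) 0).
  { replace (Finite 0) with (Rbar_mult C 0) by (simpl; f_equal; ring).
    apply is_lim_seq_scal_l. apply (is_lim_seq_incr_n a k0 0). exact Ha. }
  assert (X := is_lim_seq_le (fun _ => z) (fun m => C * a (m + k0)%nat) z 0).
  simpl in X. apply X; [intros; apply H; lia| apply is_lim_seq_const| exact Hs].
Qed.

Definition aseq (c : R) (m : nat) := c ^ m / INR (Factorial.fact m).

Lemma aseq_nonneg c m : 0 <= c -> 0 <= aseq c m.
Proof.
  intros Hc. unfold aseq. apply Rmult_le_pos; [apply pow_le; auto|].
  left. apply Rinv_0_lt_compat. apply lt_0_INR, Factorial.lt_O_fact.
Qed.

Lemma aseq_lim c : is_lim_seq (aseq c) 0.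
Proof. apply is_lim_seq_Reals. apply cv_speed_pow_fact. Qed.

Lemma aseq_half c : 0 <= c -> exists k0, forall m, (k0 <= m)%nat -> aseq c (S m) <= aseq c m / 2.
Proof.
  intros Hc. destruct (INR_archimed 1 (2 * c)) as [k Hk]; [lra|].
  exists k. intros m Hm. unfold aseq. rewrite fact_simpl, mult_INR. simpl pow.
  assert (HS : INR k <= INR (S m)) by (apply le_INR; lia).
  assert (Hf : 0 < INR (Factorial.fact m)) by (apply lt_0_INR, Factorial.lt_O_fact).
  assert (Hp : 0 <= c ^ m) by (apply pow_le; auto).
  assert (HS0 : 0 < INR (S m)) by (apply lt_0_INR; lia).
  apply (Rmult_le_reg_r (INR (S m) * INR (Factorial.fact m))). { apply Rmult_lt_0_compat; auto. }
  replace (c * c ^ m / (INR (S m) * INR (Factorial.fact m)) * (INR (S m) * INR (Factorial.fact m)))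
    with (c ^ m * c) by (field; lra).
  replace (c ^ m / INR (Factorial.fact m) / 2 * (INR (S m) * INR (Factorial.fact m)))
    with (c ^ m * (INR (S m) / 2)) by (field; lra).
  apply Rmult_le_compat_l; auto. lra.
Qed.

Lemma aseq_mono c1 c2 m : 0 <= c1 <= c2 -> aseq c1 m <= aseq c2 m.
Proof.
  intros H. unfold aseq. apply Rmult_le_compat_r.
  - left. apply Rinv_0_lt_compat. apply lt_0_INR, Factorial.lt_O_fact.
  - apply pow_incr. auto.
Qed.


Lemma cont_delta (g : R -> R) t eps : continuous g t -> 0 < eps ->
  exists del, 0 < del /\ forall s, Rabs (s - t) < del -> Rabs (g s - g t) < eps.
Proof.
  intros Hg He.
  destruct (proj1 (filterlim_locally (F:=locally t) g (g t)) Hg (mkposreal _ He)) as [d Hd].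
  exists d. split; [apply cond_pos|]. intros s Hs. apply (Hd s). exact Hs.
Qed.

Definition Dist (N n : nat) (p q : config) :=
  sumR N (fun i => sumR n (fun a => Rabs (p i a - q i a))).
Definition inbox (N n : nat) (c : config) (r : R) (p : config) :=
  forall i a, (i < N)%nat -> (a < n)%nat -> Rabs (p i a - c i a) <= r.

Lemma D_coord N n p q i a : (i < N)%nat -> (a < n)%nat -> Rabs (p i a - q i a) <= Dist N n p q.
Proof.
  intros Hi Ha. unfold Dist.
  eapply Rle_trans; [| apply (sumR_term N (fun i => sumR n (fun a => Rabs (p i a - q i a))) i)]; auto.
  - apply (sumR_term n (fun a => Rabs (p i a - q i a))); auto. intros; apply Rabs_pos.
  - intros; apply sumR_nonneg; intros; apply Rabs_pos.
Qed.

Lemma D_nonneg N n p q : 0 <= Dist N n p q.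
Proof. apply sumR_nonneg; intros; apply sumR_nonneg; intros; apply Rabs_pos. Qed.

Lemma D_coordsum N n p q e : (forall i a, (i < N)%nat -> (a < n)%nat -> Rabs (p i a - q i a) <= e) ->
  Dist N n p q <= INR N * (INR n * e).
Proof.
  intros H. unfold Dist. rewrite <- sumR_const. apply sumR_le. intros i Hi.
  rewrite <- sumR_const. apply sumR_le. intros a Ha. auto.
Qed.

Lemma D_bound N n c r p q : inbox N n c r p -> inbox N n c r q -> Dist N n p q <= INR N * (INR n * (2 * r)).
Proof.
  intros Hp Hq. apply D_coordsum. intros i a Hi Ha.
  replace (p i a - q i a) with ((p i a - c i a) - (q i a - c i a)) by ring.
  eapply Rle_trans; [apply Rabs_triang|]. rewrite Rabs_Ropp.
  specialize (Hp i a Hi Ha). specialize (Hq i a Hi Ha). lra.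
Qed.

Lemma D_refl N n p : Dist N n p p = 0.
Proof.
  unfold Dist. rewrite <- (Rmult_0_r (INR N)), <- sumR_const. apply sumR_ext. intros i _.
  rewrite <- (Rmult_0_r (INR n)), <- sumR_const. apply sumR_ext. intros a _.
  rewrite Rminus_eq_0. apply Rabs_R0.
Qed.

Lemma D_cont N n (x : R -> config) t :
  (forall i a, (i < N)%nat -> (a < n)%nat -> continuous (fun s => x s i a) t) ->
  continuous (fun s => Dist N n (x s) (x t)) t.
Proof.
  intros H. unfold Dist.
  apply (cont_sumR N (fun i s => sumR n (fun a => Rabs (x s i a - x t i a)))). intros i Hi.
  apply (cont_sumR n (fun a s => Rabs (x s i a - x t i a))). intros a Ha.
  apply continuous_Rabs_comp.
  apply (continuous_minus (K:=R_AbsRing) (V:=R_NormedModule) (fun s => x s i a) (fun _ => x t i a)).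
  - apply H; auto.
  - apply continuous_const.
Qed.

Lemma Rpm (x y : R) : x + y - x = y.
Proof. ring. Qed.
Lemma Rpm2 (x y z : R) : x + y - (x + z) = y - z.
Proof. ring. Qed.

Lemma deriv_RInt_c (g : R -> R) (c t t0: R) : (forall b, ex_RInt g t0 b) -> continuous g t ->
  is_derive (fun s => c + RInt g t0 s) t (g t).
Proof.
intros Hex Hc.
assert (H := is_derive_RInt g (fun b => RInt g t0 b) t0 t).
assert (H2 : is_derive (fun b => RInt g t0 b) t (g t)).
{ apply H; auto. exists (mkposreal 1 Rlt_0_1). intros; apply (RInt_correct (V:=R_CompleteNormedModule)). auto. }
assert (H3 := is_derive_plus (fun _ => c) (fun b => RInt g t0 b) t 0 (g t) (is_derive_const c t) H2).
simpl in H3. unfold plus in H3. simpl in H3. rewrite Rplus_0_l in H3. exact H3.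
Qed.

Section ODE.
Variables (N n : nat) (F : nat -> nat -> R -> config -> R) (t0 : R) (p0 : config) (Cb : R).
Hypothesis HCb : 0 <= Cb.
Hypothesis HFb : forall i a t p, (i < N)%nat -> (a < n)%nat -> Rabs (F i a t p) <= Cb.
Hypothesis HFl : forall c r, exists L, 0 <= L /\ forall t p q, inbox N n c r p -> inbox N n c r q ->
  forall i a, (i < N)%nat -> (a < n)%nat -> Rabs (F i a t p - F i a t q) <= L * Dist N n p q.
Hypothesis HFc : forall i a p t, (i < N)%nat -> (a < n)%nat -> continuous (fun s => F i a s p) t.

Definition ccont (x : R -> config) s :=
  forall i a, (i < N)%nat -> (a < n)%nat -> continuous (fun u => x u i a) s.

Definition Phi (x : R -> config) (s : R) : config :=
  fun i a => p0 i a + RInt (fun u => F i a u (x u)) t0 s.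

Lemma G1 x t i a : ccont x t -> (i < N)%nat -> (a < n)%nat -> continuous (fun s => F i a s (x s)) t.
Proof.
  intros Hx Hi Ha. destruct (HFl (x t) 1) as [L [HL HLb]].
  apply (cont_by_bound _ (fun s => L * Dist N n (x s) (x t) + Rabs (F i a s (x t) - F i a t (x t)))).
  - destruct (cont_delta _ t 1 (D_cont N n x t Hx)) as [del [Hdel Hd]]; [lra|].
    exists del. split; auto. intros s Hs. specialize (Hd s Hs). rewrite D_refl, Rminus_0_r in Hd.
    assert (Hb1 : inbox N n (x t) 1 (x s)).
    { intros i' a' Hi' Ha'. eapply Rle_trans; [apply D_coord; eauto|].
      eapply Rle_trans; [apply Rle_abs| lra]. }
    assert (Hb2 : inbox N n (x t) 1 (x t)).
    { intros i' a' _ _. rewrite Rminus_eq_0, Rabs_R0. lra. }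
    replace (F i a s (x s) - F i a t (x t)) with
      ((F i a s (x s) - F i a s (x t)) + (F i a s (x t) - F i a t (x t))) by ring.
    eapply Rle_trans; [apply Rabs_triang|].
    assert (Y := HLb s (x s) (x t) Hb1 Hb2 i a Hi Ha). lra.
  - apply (continuous_plus (K:=R_AbsRing) (V:=R_NormedModule)
      (fun s => L * Dist N n (x s) (x t)) (fun s => Rabs (F i a s (x t) - F i a t (x t)))).
    + apply (continuous_mult (K:=R_AbsRing) (fun _ => L) (fun s => Dist N n (x s) (x t))).
      * apply continuous_const.
      * apply D_cont; auto.
    + apply continuous_Rabs_comp.
      apply (continuous_minus (K:=R_AbsRing) (V:=R_NormedModule) (fun s => F i a s (x t)) (fun _ => F i a t (x t))).
      * apply HFc; auto.
      * apply continuous_const.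
  - rewrite D_refl, !Rminus_eq_0, Rabs_R0. try ring.
Qed.

Lemma G_exRInt x s i a : (forall u, betw t0 s u -> ccont x u) -> (i < N)%nat -> (a < n)%nat ->
  ex_RInt (fun u => F i a u (x u)) t0 s.
Proof.
  intros H Hi Ha. apply ex_RInt_cont. intros z Hz. apply G1; auto.
Qed.

Lemma Phi_t0 x i a : Phi x t0 i a = p0 i a.
Proof. unfold Phi. rewrite RInt_point. change (p0 i a + 0 = p0 i a). ring. Qed.

Lemma Phi_box x s i a : (forall u, betw t0 s u -> ccont x u) -> (i < N)%nat -> (a < n)%nat ->
  Rabs (Phi x s i a - p0 i a) <= Cb * Rabs (s - t0).
Proof.
  intros H Hi Ha. unfold Phi. rewrite Rpm.
  apply RInt_bound; [apply G_exRInt; auto|]. intros; apply HFb; auto.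
Qed.

Lemma Phi_lip x s u i a : (forall v, ccont x v) -> (i < N)%nat -> (a < n)%nat ->
  Rabs (Phi x s i a - Phi x u i a) <= Cb * Rabs (s - u).
Proof.
  intros H Hi Ha. unfold Phi.
  set (g := fun v => F i a v (x v)).
  assert (Hex : forall a1 b1, ex_RInt g a1 b1).
  { intros. apply ex_RInt_cont. intros z _. apply G1; auto. }
  replace (p0 i a + RInt g t0 s - (p0 i a + RInt g t0 u)) with (RInt g u s).
  - apply RInt_bound; auto. intros; apply HFb; auto.
  - rewrite <- (RInt_Chasles g u t0 s) by auto.
    rewrite <- (opp_RInt_swap g t0 u) by auto.
    change (- RInt g t0 u + RInt g t0 s = p0 i a + RInt g t0 s - (p0 i a + RInt g t0 u)). ring.
Qed.

Lemma Phi_cont x : (forall v, ccont x v) -> forall s, ccont (Phi x) s.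
Proof.
  intros H s i a Hi Ha. apply (lip_cont _ Cb). intros u. apply Phi_lip; auto.
Qed.

Lemma aseq0 c : aseq c 0 = 1.
Proof. unfold aseq. simpl. field. Qed.

Lemma contract x y r L B m s :
  0 <= L ->
  (forall t p q, inbox N n p0 r p -> inbox N n p0 r q -> forall i a, (i < N)%nat -> (a < n)%nat ->
     Rabs (F i a t p - F i a t q) <= L * Dist N n p q) ->
  (forall u, betw t0 s u -> ccont x u /\ ccont y u /\ inbox N n p0 r (x u) /\ inbox N n p0 r (y u) /\
     Dist N n (x u) (y u) <= B * aseq (INR N * (INR n * L) * Rabs (u - t0)) m) ->
  Dist N n (Phi x s) (Phi y s) <= B * aseq (INR N * (INR n * L) * Rabs (s - t0)) (S m).
Proof.
  intros HL HLb H. set (K := INR N * (INR n * L)).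
  set (c := L * B * K ^ m / INR (Factorial.fact m)).
  eapply Rle_trans; [apply (D_coordsum _ _ _ _ (c * Rabs (s - t0) ^ (S m) / INR (S m)))|].
  - intros i a Hi Ha. unfold Phi.
    rewrite Rpm2.
    assert (Ex : ex_RInt (fun u => F i a u (x u)) t0 s) by (apply G_exRInt; auto; intros; apply H; auto).
    assert (Ey : ex_RInt (fun u => F i a u (y u)) t0 s) by (apply G_exRInt; auto; intros; apply H; auto).
    assert (Hm := RInt_minus _ _ t0 s Ex Ey). change (RInt (fun u => F i a u (x u) - F i a u (y u)) t0 s =
       RInt (fun u => F i a u (x u)) t0 s - RInt (fun u => F i a u (y u)) t0 s) in Hm.
    rewrite <- Hm. apply RInt_powbound.
    + apply (ex_RInt_minus (V:=R_NormedModule) _ _ t0 s Ex Ey).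
    + intros u Hu. destruct (H u Hu) as [_ [_ [Hxu [Hyu Hd]]]].
      eapply Rle_trans; [apply HLb; eauto|].
      eapply Rle_trans; [apply Rmult_le_compat_l; [exact HL| exact Hd]|].
      unfold c, aseq. rewrite Rpow_mult_distr. right. fold K. field. apply INR_fact_neq_0.
  - right. unfold c, aseq. rewrite Rpow_mult_distr. fold K. rewrite fact_simpl, mult_INR.
    replace (K ^ S m) with (K * K ^ m) by reflexivity. unfold K.
    field. split; [apply INR_fact_neq_0| apply not_0_INR; lia].
Qed.


Fixpoint X (m : nat) : R -> config :=
  match m with O => fun _ => p0 | S m' => Phi (X m') end.

Lemma X_cont m s : ccont (X m) s.
Proof.
  revert s. induction m; intros s.
  - intros i a _ _. simpl. apply continuous_const.
  - simpl. apply Phi_cont. exact IHm.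
Qed.

Lemma X_lip m s u i a : (i < N)%nat -> (a < n)%nat -> Rabs (X m s i a - X m u i a) <= Cb * Rabs (s - u).
Proof.
  intros Hi Ha. destruct m.
  - simpl. rewrite Rminus_eq_0, Rabs_R0. apply Rmult_le_pos; auto. apply Rabs_pos.
  - simpl. apply Phi_lip; auto. apply X_cont.
Qed.

Lemma X_t0 m i a : X m t0 i a = p0 i a.
Proof. destruct m; [reflexivity|]. simpl. apply Phi_t0. Qed.

Lemma X_box m T s : Rabs (s - t0) <= T -> inbox N n p0 (Cb * T) (X m s).
Proof.
  intros Hs i a Hi Ha. rewrite <- (X_t0 m i a). eapply Rle_trans; [apply X_lip; auto|].
  apply Rmult_le_compat_l; auto.
Qed.

Lemma X_conv T : 0 <= T -> exists B c k0, 0 <= B /\ 0 <= c /\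
  (forall m, (k0 <= m)%nat -> aseq c (S m) <= aseq c m / 2) /\
  forall m s, Rabs (s - t0) <= T -> Dist N n (X (S m) s) (X m s) <= B * aseq c m.
Proof.
  intros HT. destruct (HFl p0 (Cb * T)) as [L [HL HLb]].
  set (K := INR N * (INR n * L)).
  assert (HK : 0 <= K) by (unfold K; apply Rmult_le_pos; [apply pos_INR| apply Rmult_le_pos; auto; apply pos_INR]).
  set (B := INR N * (INR n * (2 * (Cb * T)))).
  assert (HB : 0 <= B) by (unfold B; apply Rmult_le_pos; [apply pos_INR| apply Rmult_le_pos; [apply pos_INR| ]]; nra).
  destruct (aseq_half (K * T)) as [k0 Hk0]; [nra|].
  exists B, (K * T), k0. split; [auto|]. split; [nra|]. split; [auto|].
  assert (Hind : forall m s, Rabs (s - t0) <= T -> Dist N n (X (S m) s) (X m s) <= B * aseq (K * Rabs (s - t0)) m).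
  { induction m; intros s Hs.
    - rewrite aseq0, Rmult_1_r. apply D_bound with (c := p0); apply X_box; auto.
    - apply (contract (X (S m)) (X m) (Cb * T)); auto.
      intros u Hu. assert (Hu' : Rabs (u - t0) <= T) by (eapply Rle_trans; [apply betw_abs; eauto| auto]).
      repeat split; try apply X_cont; try (apply X_box; auto). apply IHm; auto. }
  intros m s Hs. eapply Rle_trans; [apply Hind; auto|]. apply Rmult_le_compat_l; auto.
  apply aseq_mono. split; [apply Rmult_le_pos; auto; apply Rabs_pos| apply Rmult_le_compat_l; auto].
Qed.

Definition Xl (s : R) : config := fun i a => real (Lim_seq (fun m => X m s i a)).

Lemma Xl_conv T : 0 <= T -> exists B c k0, 0 <= B /\ 0 <= c /\
  (forall m, (k0 <= m)%nat -> aseq c (S m) <= aseq c m / 2) /\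
  forall s i a, Rabs (s - t0) <= T -> (i < N)%nat -> (a < n)%nat ->
    is_lim_seq (fun m => X m s i a) (Xl s i a) /\
    forall m, (k0 <= m)%nat -> Rabs (Xl s i a - X m s i a) <= 2 * (B * aseq c m).
Proof.
  intros HT. destruct (X_conv T HT) as [B [c [k0 [HB [Hc [Hh Hd]]]]]].
  exists B, c, k0. split; [auto|]. split; [auto|]. split; [auto|].
  intros s i a Hs Hi Ha.
  destruct (cauchy_lim (fun m => X m s i a) (fun m => B * aseq c m) k0) as [l [Hl Hb]].
  - intros m. eapply Rle_trans; [apply (D_coord N n (X (S m) s) (X m s)); auto| apply Hd; auto].
  - intros m Hm. specialize (Hh m Hm). assert (Y := aseq_nonneg c m Hc). nra.
  - intros m. apply Rmult_le_pos; auto. apply aseq_nonneg; auto.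
  - replace (Finite 0) with (Rbar_mult B 0) by (simpl; f_equal; ring).
    apply is_lim_seq_scal_l. apply aseq_lim.
  - assert (E : Xl s i a = l) by (unfold Xl; rewrite (is_lim_seq_unique _ _ Hl); reflexivity).
    rewrite E. auto.
Qed.

Lemma Xl_lim s i a : (i < N)%nat -> (a < n)%nat -> is_lim_seq (fun m => X m s i a) (Xl s i a).
Proof.
  intros Hi Ha. destruct (Xl_conv (Rabs (s - t0)) (Rabs_pos _)) as [B [c [k0 [_ [_ [_ H]]]]]].
  apply H; auto. lra.
Qed.

Lemma Xl_lip s u i a : (i < N)%nat -> (a < n)%nat -> Rabs (Xl s i a - Xl u i a) <= Cb * Rabs (s - u).
Proof.
  intros Hi Ha.
  apply (lim_le_const (fun m => Rabs (X m s i a - X m u i a))).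
  - apply (is_lim_seq_abs (fun m => X m s i a - X m u i a) (Xl s i a - Xl u i a)).
    apply is_lim_seq_minus'; apply Xl_lim; auto.
  - intros m. apply X_lip; auto.
Qed.

Lemma Xl_t0 i a : Xl t0 i a = p0 i a.
Proof.
  unfold Xl. rewrite (Lim_seq_ext _ (fun _ => p0 i a)) by (intros; apply X_t0).
  rewrite Lim_seq_const. reflexivity.
Qed.

Lemma Xl_cont s : ccont Xl s.
Proof. intros i a Hi Ha. apply (lip_cont _ Cb). intros u. apply Xl_lip; auto. Qed.

Lemma Xl_box T s : Rabs (s - t0) <= T -> inbox N n p0 (Cb * T) (Xl s).
Proof.
  intros Hs i a Hi Ha. rewrite <- (Xl_t0 i a). eapply Rle_trans; [apply Xl_lip; auto|].
  apply Rmult_le_compat_l; auto.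
Qed.

Lemma Xl_fp T s i a : 0 <= T -> Rabs (s - t0) <= T -> (i < N)%nat -> (a < n)%nat ->
  Xl s i a = Phi Xl s i a.
Proof.
  intros HT Hs Hi Ha.
  destruct (Xl_conv T HT) as [B [c [k0 [HB [Hc [Hh Hconv]]]]]].
  destruct (HFl p0 (Cb * T)) as [L [HL HLb]].
  set (K := INR N * (INR n * L)).
  assert (HK : 0 <= K) by (unfold K; apply Rmult_le_pos; [apply pos_INR| apply Rmult_le_pos; auto; apply pos_INR]).
  assert (HNn : 0 <= INR N * INR n) by (apply Rmult_le_pos; apply pos_INR).
  assert (Hle : Rabs (Xl s i a - Phi Xl s i a) <= 0).
  { apply (le_lim0 _ (2 * B + INR N * (INR n * (2 * B)) * (K * T)) (aseq c) k0 (aseq_lim c)).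
    intros m Hm.
    assert (H1 : Rabs (Xl s i a - X (S m) s i a) <= 2 * (B * aseq c m)).
    { eapply Rle_trans; [apply Hconv; auto|]. specialize (Hh m Hm).
      assert (Y := aseq_nonneg c m Hc). nra. }
    assert (H2 : Dist N n (Phi (X m) s) (Phi Xl s) <= (INR N * (INR n * (2 * (B * aseq c m)))) *
               aseq (K * Rabs (s - t0)) 1).
    { apply (contract (X m) Xl (Cb * T) L _ 0 s); auto.
      intros u Hu. assert (Hu' : Rabs (u - t0) <= T) by (eapply Rle_trans; [apply betw_abs; eauto| auto]).
      repeat split; try apply X_cont; try apply Xl_cont; try (apply X_box; auto); try (apply Xl_box; auto).
      rewrite aseq0, Rmult_1_r. apply D_coordsum. intros i' a' Hi' Ha'.
      rewrite <- Rabs_Ropp, Ropp_minus_distr. apply Hconv; auto. }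
    assert (H3 : Rabs (Phi (X m) s i a - Phi Xl s i a) <= Dist N n (Phi (X m) s) (Phi Xl s)) by (apply D_coord; auto).
    assert (H4 : aseq (K * Rabs (s - t0)) 1 <= K * T).
    { unfold aseq. simpl. rewrite Rmult_1_r, Rdiv_1_r. apply Rmult_le_compat_l; auto. }
    assert (Y := aseq_nonneg c m Hc).
    replace (Xl s i a - Phi Xl s i a) with ((Xl s i a - X (S m) s i a) + (Phi (X m) s i a - Phi Xl s i a))
      by (simpl; ring).
    eapply Rle_trans; [apply Rabs_triang|].
    assert (Y2 : INR N * (INR n * (2 * (B * aseq c m))) * aseq (K * Rabs (s - t0)) 1 <=
                 INR N * (INR n * (2 * (B * aseq c m))) * (K * T)).
    { apply Rmult_le_compat_l; auto. apply Rmult_le_pos; [apply pos_INR|]. apply Rmult_le_pos; [apply pos_INR|]. nra. }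
    nra. }
  assert (Y := Rabs_pos (Xl s i a - Phi Xl s i a)).
  assert (Rabs (Xl s i a - Phi Xl s i a) = 0) by lra.
  apply Rabs_eq_0 in H. lra.
Qed.


Lemma Xl_deriv t i a : (i < N)%nat -> (a < n)%nat -> is_derive (fun s => Xl s i a) t (F i a t (Xl t)).
Proof.
  intros Hi Ha.
  apply (is_derive_ext_loc (fun s => Phi Xl s i a)).
  - exists (mkposreal 1 Rlt_0_1). intros s Hs. change (Rabs (s - t) < 1) in Hs.
    symmetry. apply (Xl_fp (Rabs (t - t0) + 1)); auto.
    + assert (Y := Rabs_pos (t - t0)). lra.
    + replace (s - t0) with ((s - t) + (t - t0)) by ring.
      eapply Rle_trans; [apply Rabs_triang| lra].
  - unfold Phi. apply deriv_RInt_c.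
    + intros b. apply ex_RInt_cont. intros z _. apply G1; auto. apply Xl_cont.
    + apply G1; auto. apply Xl_cont.
Qed.

Lemma Xl_unique (lo hi : Rbar) (q : R -> config) :
  Rbar_lt lo t0 -> Rbar_lt t0 hi ->
  (forall t : R, Rbar_lt lo t -> Rbar_lt t hi -> forall i a, (i < N)%nat -> (a < n)%nat ->
     is_derive (fun s => q s i a) t (F i a t (q t))) ->
  (forall i a, (i < N)%nat -> (a < n)%nat -> q t0 i a = p0 i a) ->
  forall t : R, Rbar_lt lo t -> Rbar_lt t hi -> forall i a, (i < N)%nat -> (a < n)%nat -> q t i a = Xl t i a.
Proof.
  intros Hlo Hhi Hq Hq0 t Hlot Hthi.
  assert (Hin : forall u, betw t0 t u -> Rbar_lt lo u /\ Rbar_lt u hi).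
  { intros u Hu. unfold betw, Rmin, Rmax in Hu.
    clear Hq. destruct lo as [l| |]; destruct hi as [h| |]; simpl in *; repeat destruct Rle_dec; try tauto; try (split; lra); try lra. }
  assert (Hqc : forall u, betw t0 t u -> ccont q u).
  { intros u Hu i a Hi Ha. destruct (Hin u Hu) as [H1 H2].
    apply ex_derive_cont. eexists. apply Hq; auto. }
  assert (Hqfp : forall s, betw t0 t s -> forall i a, (i < N)%nat -> (a < n)%nat -> q s i a = Phi q s i a).
  { intros s Hs i a Hi Ha.
    assert (HR : is_RInt (fun u => F i a u (q u)) t0 s (minus (q s i a) (q t0 i a))).
    { apply (is_RInt_derive (V:=R_CompleteNormedModule) (fun u => q u i a)).
      - intros x Hx. destruct (Hin x (betw_trans _ _ _ _ Hs Hx)) as [H1 H2]. apply Hq; auto.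
      - intros x Hx. apply G1; auto. apply Hqc. exact (betw_trans _ _ _ _ Hs Hx). }
    pose proof (is_RInt_unique (V:=R_CompleteNormedModule) _ _ _ _ HR) as HR2. unfold Phi. rewrite HR2. rewrite Hq0 by auto.
    change (q s i a = p0 i a + (q s i a - p0 i a)). ring. }
  set (T := Rabs (t - t0)).
  assert (HT : 0 <= T) by apply Rabs_pos.
  assert (Hqbox : forall u, betw t0 t u -> inbox N n p0 (Cb * T) (q u)).
  { intros u Hu i a Hi Ha. rewrite (Hqfp u Hu i a Hi Ha).
    eapply Rle_trans; [apply Phi_box; auto|].
    - intros v Hv. apply Hqc. exact (betw_trans _ _ _ _ Hu Hv).
    - apply Rmult_le_compat_l; auto. apply betw_abs; auto. }
  assert (Hxbox : forall u, betw t0 t u -> inbox N n p0 (Cb * T) (Xl u)).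
  { intros u Hu. apply Xl_box. apply betw_abs; auto. }
  destruct (HFl p0 (Cb * T)) as [L [HL HLb]].
  set (K := INR N * (INR n * L)).
  assert (HK : 0 <= K) by (unfold K; apply Rmult_le_pos; [apply pos_INR| apply Rmult_le_pos; auto; apply pos_INR]).
  set (B := INR N * (INR n * (2 * (Cb * T)))).
  assert (HB : 0 <= B) by (unfold B; apply Rmult_le_pos; [apply pos_INR| apply Rmult_le_pos; [apply pos_INR| ]]; nra).
  assert (Hind : forall m s, betw t0 t s -> Dist N n (q s) (Xl s) <= B * aseq (K * Rabs (s - t0)) m).
  { induction m; intros s Hs.
    - rewrite aseq0, Rmult_1_r. apply D_bound with (c := p0); auto.
    - assert (E : Dist N n (q s) (Xl s) = Dist N n (Phi q s) (Phi Xl s)).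
      { unfold Dist. apply sumR_ext. intros i Hi. apply sumR_ext. intros a Ha.
        rewrite <- (Hqfp s Hs i a Hi Ha), <- (Xl_fp T s i a HT (betw_abs _ _ _ Hs) Hi Ha). reflexivity. }
      rewrite E. apply (contract q Xl (Cb * T)); auto.
      intros u Hu. assert (Hu' := betw_trans _ _ _ _ Hs Hu).
      repeat split; auto; try apply Xl_cont; apply IHm; auto.
    }
  intros i a Hi Ha.
  assert (Hle : Rabs (q t i a - Xl t i a) <= 0).
  { apply (le_lim0 _ B (aseq (K * T)) 0 (aseq_lim _)). intros m _.
    eapply Rle_trans; [apply D_coord; eauto|]. apply Hind. apply betw_r. }
  assert (Y := Rabs_pos (q t i a - Xl t i a)).
  assert (Rabs (q t i a - Xl t i a) = 0) by lra.
  apply Rabs_eq_0 in H. lra.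
Qed.

Theorem ode_global : exists p : R -> config,
  (forall t i a, (i < N)%nat -> (a < n)%nat -> is_derive (fun s => p s i a) t (F i a t (p t))) /\
  (forall i a, (i < N)%nat -> (a < n)%nat -> p t0 i a = p0 i a) /\
  (forall (lo hi : Rbar) (q : R -> config),
     Rbar_lt lo t0 -> Rbar_lt t0 hi ->
     (forall t : R, Rbar_lt lo t -> Rbar_lt t hi -> forall i a, (i < N)%nat -> (a < n)%nat ->
        is_derive (fun s => q s i a) t (F i a t (q t))) ->
     (forall i a, (i < N)%nat -> (a < n)%nat -> q t0 i a = p0 i a) ->
     forall t : R, Rbar_lt lo t -> Rbar_lt t hi -> forall i a, (i < N)%nat -> (a < n)%nat -> q t i a = p t i a).
Proof.
  exists Xl. split; [intros; apply Xl_deriv; auto|]. split; [intros; apply Xl_t0|].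
  intros lo hi q H1 H2 H3 H4. apply Xl_unique; auto.
Qed.

End ODE.


Lemma h_bound h : admissible_h h -> exists M, 0 <= M /\ forall y, Rabs (h y) <= M.
Proof.
  intros [H0 [[M HM] _]]. exists (Rabs M). split; [apply Rabs_pos|]. intros y.
  destruct (Rle_dec y 0) as [Hy|Hy].
  - rewrite H0 by auto. rewrite Rabs_R0. apply Rabs_pos.
  - eapply Rle_trans; [apply HM; lra| apply Rle_abs].
Qed.

Lemma h_lip h : admissible_h h -> forall Y, exists K, 0 <= K /\
  forall y z, y <= Y -> z <= Y -> Rabs (h y - h z) <= K * Rabs (y - z).
Proof.
  intros [H0 [_ [Hreg [[Mq [dq [Hdq Hq]]] [[Md [dd [Hdd Hd]]] _]]]]] Y.
  set (Y' := Rmax Y dd).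
  assert (HcD : forall y, 0 < y -> continuity_pt (Derive h) y).
  { intros y Hy. apply continuity_pt_filterlim. destruct (Hreg y Hy) as [_ [HD _]].
    apply (ex_derive_continuous (K:=R_AbsRing) (V:=R_NormedModule)). exact HD. }
  destruct (continuity_ab_maj (fun y => Rabs (Derive h y)) (dd / 2) Y') as [Mx [HMx HMxr]].
  { unfold Y'. assert (Y1 := Rmax_r Y dd). lra. }
  { intros c Hc. change (continuity_pt (comp Rabs (Derive h)) c). apply (continuity_pt_comp (Derive h) Rabs c); [apply HcD; lra| apply Rcontinuity_abs]. }
  set (K1 := Rmax (Rabs Md) (Rabs (Derive h Mx))).
  assert (HK1 : 0 <= K1) by (unfold K1; eapply Rle_trans; [apply Rabs_pos| apply Rmax_l]).
  assert (HD1 : forall y, 0 < y <= Y -> Rabs (Derive h y) <= K1).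
  { intros y Hy. destruct (Rlt_dec y dd) as [Hyd|Hyd].
    - eapply Rle_trans; [apply Hd; lra|]. eapply Rle_trans; [apply Rle_abs| apply Rmax_l].
    - eapply Rle_trans; [apply (HMx y)|].
      + unfold Y'. assert (Y1 := Rmax_l Y dd). lra.
      + unfold K1; apply Rmax_r. }
  assert (Hmvt : forall y z, 0 < y -> y <= z -> z <= Y -> Rabs (h z - h y) <= K1 * (z - y)).
  { intros y z Hy Hyz HzY.
    destruct (MVT_gen h y z (Derive h)) as [c [Hc Hceq]].
    - intros x Hx. apply Derive_correct. apply Hreg. unfold Rmin, Rmax in Hx. destruct Rle_dec; lra.
    - intros x Hx. apply continuity_pt_filterlim.
      apply (ex_derive_continuous (K:=R_AbsRing) (V:=R_NormedModule)). apply Hreg.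
      unfold Rmin, Rmax in Hx. destruct Rle_dec; lra.
    - rewrite Hceq, Rabs_mult, (Rabs_pos_eq (z - y)) by lra. apply Rmult_le_compat_r; [lra|].
      apply HD1. unfold Rmin, Rmax in Hc. destruct Rle_dec; lra. }
  set (K := Rmax K1 (Rabs Mq)).
  assert (HK1K : K1 <= K) by apply Rmax_l.
  assert (HMqK : Mq <= K) by (eapply Rle_trans; [apply Rle_abs| apply Rmax_r]).
  assert (Hlin : forall z, 0 < z <= Y -> Rabs (h z) <= K * z).
  { intros z Hz. set (e := Rmin z dq / 2).
    assert (He : 0 < e < z /\ e < dq).
    { unfold e. assert (Y1 := Rmin_l z dq). assert (Y2 := Rmin_r z dq).
      assert (Y3 : 0 < Rmin z dq) by (apply Rmin_pos; lra). lra. }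
    assert (Hhe : Rabs (h e) <= Mq * e).
    { assert (X := Hq e ltac:(lra)). unfold Rdiv in X. rewrite Rabs_mult, Rabs_inv, (Rabs_pos_eq e) in X by lra.
      apply (Rmult_le_compat_r e) in X; [| lra]. field_simplify in X; lra. }
    assert (Hm := Hmvt e z ltac:(lra) ltac:(lra) ltac:(lra)).
    replace (h z) with ((h z - h e) + h e) by ring.
    eapply Rle_trans; [apply Rabs_triang|].
    assert (K1 * (z - e) <= K * (z - e)) by (apply Rmult_le_compat_r; lra).
    assert (Mq * e <= K * e) by (apply Rmult_le_compat_r; lra). lra. }
  exists K. split; [lra|]. intros y z Hy Hz.
  assert (HK0 : 0 <= K) by lra.
  destruct (Rle_dec y 0) as [Hy0|Hy0]; destruct (Rle_dec z 0) as [Hz0|Hz0].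
  - rewrite !H0 by auto. rewrite Rminus_0_r, Rabs_R0. apply Rmult_le_pos; [lra| apply Rabs_pos].
  - rewrite (H0 y) by auto. rewrite Rminus_0_l, Rabs_Ropp.
    eapply Rle_trans; [apply Hlin; lra|]. apply Rmult_le_compat_l; [lra|].
    rewrite Rabs_left1 by lra. lra.
  - rewrite (H0 z) by auto. rewrite Rminus_0_r.
    eapply Rle_trans; [apply Hlin; lra|]. apply Rmult_le_compat_l; [lra|].
    rewrite Rabs_pos_eq by lra. lra.
  - destruct (Rle_dec y z) as [Hyz|Hyz].
    + rewrite <- Rabs_Ropp, Ropp_minus_distr, (Rabs_left1 (y - z)) by lra. replace (- (y - z)) with (z - y) by ring.
      eapply Rle_trans; [apply Hmvt; lra|]. apply Rmult_le_compat_r; lra.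
    + rewrite (Rabs_pos_eq (y - z)) by lra.
      eapply Rle_trans; [apply Hmvt; lra|]. apply Rmult_le_compat_r; lra.
Qed.

Definition LL (N n : nat) (f : config -> R) := forall c r, exists L M, 0 <= L /\ 0 <= M /\
  forall p q, inbox N n c r p -> inbox N n c r q ->
    Rabs (f p - f q) <= L * Dist N n p q /\ Rabs (f p) <= M.

Section LLs.
Variables N n : nat.

Lemma LL_ext f g : (forall p, f p = g p) -> LL N n f -> LL N n g.
Proof.
  intros E H c r. destruct (H c r) as [L [M [HL [HM Hb]]]]. exists L, M. split; [auto|]. split; [auto|].
  intros p q Hp Hq. rewrite <- !E. apply Hb; auto.
Qed.

Lemma LL_const k : LL N n (fun _ => k).
Proof.
  intros c r. exists 0, (Rabs k). split; [lra|]. split; [apply Rabs_pos|].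
  intros p q Hp Hq. split.
  - rewrite Rminus_eq_0, Rabs_R0, Rmult_0_l. lra.
  - lra.
Qed.

Lemma LL_coord i a : (i < N)%nat -> (a < n)%nat -> LL N n (fun p => p i a).
Proof.
  intros Hi Ha c r. exists 1, (Rabs (c i a) + Rabs r). split; [lra|]. split.
  { assert (Y1 := Rabs_pos (c i a)). assert (Y2 := Rabs_pos r). lra. }
  intros p q Hp Hq. split.
  - rewrite Rmult_1_l. apply D_coord; auto.
  - specialize (Hp i a Hi Ha). replace (p i a) with (c i a + (p i a - c i a)) by ring.
    eapply Rle_trans; [apply Rabs_triang|]. assert (Y := Rle_abs r). lra.
Qed.

Lemma LL_plus f g : LL N n f -> LL N n g -> LL N n (fun p => f p + g p).
Proof.
  intros Hf Hg c r. destruct (Hf c r) as [L1 [M1 [HL1 [HM1 H1]]]]. destruct (Hg c r) as [L2 [M2 [HL2 [HM2 H2]]]].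
  exists (L1 + L2), (M1 + M2). split; [lra|]. split; [lra|].
  intros p q Hp Hq. destruct (H1 p q Hp Hq) as [A1 B1]. destruct (H2 p q Hp Hq) as [A2 B2]. split.
  - replace (f p + g p - (f q + g q)) with ((f p - f q) + (g p - g q)) by ring.
    eapply Rle_trans; [apply Rabs_triang|]. lra.
  - eapply Rle_trans; [apply Rabs_triang|]. lra.
Qed.

Lemma LL_opp f : LL N n f -> LL N n (fun p => - f p).
Proof.
  intros Hf c r. destruct (Hf c r) as [L1 [M1 [HL1 [HM1 H1]]]].
  exists L1, M1. split; [auto|]. split; [auto|]. intros p q Hp Hq; destruct (H1 p q Hp Hq) as [A1 A2]. split.
  - replace (- f p - - f q) with (- (f p - f q)) by ring. rewrite Rabs_Ropp. auto.
  - rewrite Rabs_Ropp. auto.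
Qed.

Lemma LL_mult f g : LL N n f -> LL N n g -> LL N n (fun p => f p * g p).
Proof.
  intros Hf Hg c r. destruct (Hf c r) as [L1 [M1 [HL1 [HM1 H1]]]]. destruct (Hg c r) as [L2 [M2 [HL2 [HM2 H2]]]].
  exists (M1 * L2 + M2 * L1), (M1 * M2). split; [nra|]. split; [nra|].
  intros p q Hp Hq. destruct (H1 p q Hp Hq) as [A1 B1]. destruct (H2 p q Hp Hq) as [A2 B2].
  destruct (H2 q p Hq Hp) as [_ B2']. split.
  - replace (f p * g p - f q * g q) with (f p * (g p - g q) + g q * (f p - f q)) by ring.
    eapply Rle_trans; [apply Rabs_triang|]. rewrite !Rabs_mult.
    assert (D0 := D_nonneg N n p q).
    assert (Rabs (f p) * Rabs (g p - g q) <= M1 * (L2 * Dist N n p q)).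
    { apply Rmult_le_compat; auto; apply Rabs_pos. }
    assert (Rabs (g q) * Rabs (f p - f q) <= M2 * (L1 * Dist N n p q)).
    { apply Rmult_le_compat; auto; apply Rabs_pos. }
    nra.
  - rewrite Rabs_mult. apply Rmult_le_compat; auto; apply Rabs_pos.
Qed.

Lemma LL_sumR m (f : nat -> config -> R) : (forall k, (k < m)%nat -> LL N n (f k)) ->
  LL N n (fun p => sumR m (fun k => f k p)).
Proof.
  induction m; intros H.
  - apply (LL_ext (fun _ => 0)); [intros; reflexivity| apply LL_const].
  - apply (LL_ext (fun p => sumR m (fun k => f k p) + f m p)); [intros; rewrite sumR_S; reflexivity|].
    apply LL_plus; [apply IHm; intros; apply H; lia| apply H; lia].
Qed.

Lemma LL_comp h f : admissible_h h -> LL N n f -> LL N n (fun p => h (f p)).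
Proof.
  intros Hh Hf c r. destruct (Hf c r) as [L [M [HL [HM H]]]].
  destruct (h_lip h Hh M) as [K [HK HKb]]. destruct (h_bound h Hh) as [Mh [HMh HMhb]].
  exists (K * L), Mh. split; [nra|]. split; [auto|].
  intros p q Hp Hq. destruct (H p q Hp Hq) as [A B]. destruct (H q p Hq Hp) as [_ B']. split; [|apply HMhb].
  eapply Rle_trans; [apply HKb|].
  - eapply Rle_trans; [apply Rle_abs| exact B].
  - eapply Rle_trans; [apply Rle_abs| exact B'].
  - rewrite Rmult_assoc. apply Rmult_le_compat_l; auto.
Qed.

End LLs.

Lemma LL_psi N n E d i h : (i < N)%nat -> admissible_h h -> LL N n (fun p => h (psi N n E d i p)).
Proof.
  intros Hi Hh. apply LL_comp; auto. unfold psi.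
  apply LL_mult; [apply LL_const|].
  apply (LL_sumR N n N (fun j p => if E i j then (dist2 n p i j - d i j ^ 2) ^ 2 else 0)).
  intros j Hj. destruct (E i j); [| apply LL_const].
  apply (LL_ext N n (fun p => (dist2 n p i j - d i j ^ 2) * (dist2 n p i j - d i j ^ 2))); [intros; ring|].
  assert (Hdi : LL N n (fun p => dist2 n p i j - d i j ^ 2)).
  { apply (LL_ext N n (fun p => dist2 n p i j + - (d i j ^ 2))); [intros; ring|].
    apply LL_plus; [| apply LL_const]. unfold dist2.
    apply (LL_sumR N n n (fun a p => (p j a - p i a) ^ 2)). intros a Ha.
    apply (LL_ext N n (fun p => (p j a + - p i a) * (p j a + - p i a))); [intros; ring|].
    assert (LL N n (fun p => p j a + - p i a)).
    { apply LL_plus; [apply LL_coord; auto| apply LL_opp, LL_coord; auto]. }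
    apply LL_mult; auto. }
  apply LL_mult; auto.
Qed.


Lemma trig_bound s x y A B : 0 <= s -> Rabs (s * cos x * A + s * sin y * B) <= s * (Rabs A + Rabs B).
Proof.
  intros Hs. eapply Rle_trans; [apply Rabs_triang|]. rewrite !Rabs_mult, (Rabs_pos_eq s) by auto.
  assert (Hc : Rabs (cos x) <= 1) by (apply Rabs_le; apply COS_bound).
  assert (Hsn : Rabs (sin y) <= 1) by (apply Rabs_le; apply SIN_bound).
  assert (s * Rabs (cos x) * Rabs A <= s * 1 * Rabs A).
  { apply Rmult_le_compat_r; [apply Rabs_pos|]. apply Rmult_le_compat_l; auto. }
  assert (s * Rabs (sin y) * Rabs B <= s * 1 * Rabs B).
  { apply Rmult_le_compat_r; [apply Rabs_pos|]. apply Rmult_le_compat_l; auto. }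
  lra.
Qed.

Section Concrete.
Variables (N n : nat) (E : nat -> nat -> bool) (d : nat -> nat -> R) (b : nat -> nat -> nat -> R)
  (om ph : nat -> nat -> R) (h1 h2 : R -> R).
Hypothesis Hh1 : admissible_h h1.
Hypothesis Hh2 : admissible_h h2.

Let F := field N n E d b om ph h1 h2.

Lemma ctrl_bound i k t p M1 M2 : (forall y, Rabs (h1 y) <= M1) -> (forall y, Rabs (h2 y) <= M2) ->
  Rabs (ctrl N n E d om ph h1 h2 i k t p) <= sqrt (om i k) * (M1 + M2).
Proof.
  intros H1 H2. unfold ctrl. eapply Rle_trans; [apply trig_bound; apply sqrt_pos|].
  apply Rmult_le_compat_l; [apply sqrt_pos|]. specialize (H1 (psi N n E d i p)). specialize (H2 (psi N n E d i p)). lra.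
Qed.

Lemma field_bound : exists Cb, 0 <= Cb /\ forall i a t p, (i < N)%nat -> (a < n)%nat -> Rabs (F i a t p) <= Cb.
Proof.
  destruct (h_bound h1 Hh1) as [M1 [HM1 HB1]]. destruct (h_bound h2 Hh2) as [M2 [HM2 HB2]].
  destruct (fin_bound2 N n (fun i a => sumR n (fun k => sqrt (om i k) * (M1 + M2) * Rabs (b i k a)))) as [C [HC HCb]].
  exists C. split; auto. intros i a t p Hi Ha. eapply Rle_trans; [| apply HCb; auto].
  unfold F, field. eapply Rle_trans; [apply sumR_abs|]. apply sumR_le. intros k Hk.
  rewrite Rabs_mult. apply Rmult_le_compat_r; [apply Rabs_pos|]. apply ctrl_bound; auto. all: auto.
Qed.

Lemma field_lip : forall c r, exists L, 0 <= L /\ forall t p q, inbox N n c r p -> inbox N n c r q ->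
  forall i a, (i < N)%nat -> (a < n)%nat -> Rabs (F i a t p - F i a t q) <= L * Dist N n p q.
Proof.
  intros c r.
  destruct (fin_choice N (fun i L => forall p q, inbox N n c r p -> inbox N n c r q ->
      Rabs (h1 (psi N n E d i p) - h1 (psi N n E d i q)) + Rabs (h2 (psi N n E d i p) - h2 (psi N n E d i q))
      <= L * Dist N n p q)) as [L [HL HLb]].
  { intros i L L' HLL H p q Hp Hq. eapply Rle_trans; [apply H; auto|].
    apply Rmult_le_compat_r; auto. apply D_nonneg. }
  { intros i Hi. destruct (LL_psi N n E d i h1 Hi Hh1 c r) as [L1 [_ [HL1 _ ]]].
    destruct (LL_psi N n E d i h1 Hi Hh1 c r) as [L1' [M1' [HL1' [_ H1]]]].
    destruct (LL_psi N n E d i h2 Hi Hh2 c r) as [L2 [M2 [HL2 [_ H2]]]].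
    exists (L1' + L2). split; [lra|]. intros p q Hp Hq.
    destruct (H1 p q Hp Hq) as [A1 _]. destruct (H2 p q Hp Hq) as [A2 _]. lra. }
  destruct (fin_bound2 N n (fun i a => sumR n (fun k => sqrt (om i k) * Rabs (b i k a)) * L)) as [C [HC HCb]].
  exists C. split; auto. intros t p q Hp Hq i a Hi Ha.
  assert (D0 := D_nonneg N n p q).
  eapply Rle_trans; [| apply Rmult_le_compat_r; [exact D0| apply HCb; auto]].
  unfold F, field. rewrite <- sumR_minus. eapply Rle_trans; [apply sumR_abs|].
  rewrite Rmult_assoc, <- sumR_scal_r. apply sumR_le. intros k Hk.
  replace (ctrl N n E d om ph h1 h2 i k t p * b i k a - ctrl N n E d om ph h1 h2 i k t q * b i k a)
    with ((ctrl N n E d om ph h1 h2 i k t p - ctrl N n E d om ph h1 h2 i k t q) * b i k a) by ring.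
  rewrite Rabs_mult.
  replace (sqrt (om i k) * Rabs (b i k a) * (L * Dist N n p q)) with
    ((sqrt (om i k) * (L * Dist N n p q)) * Rabs (b i k a)) by ring.
  apply Rmult_le_compat_r; [apply Rabs_pos|].
  unfold ctrl.
  match goal with |- Rabs (?s * cos ?x * ?A + ?s * sin ?y * ?B - (?s * cos ?x * ?A' + ?s * sin ?y * ?B')) <= _ =>
    replace (s * cos x * A + s * sin y * B - (s * cos x * A' + s * sin y * B'))
      with (s * cos x * (A - A') + s * sin y * (B - B')) by ring end.
  eapply Rle_trans; [apply trig_bound; apply sqrt_pos|].
  apply Rmult_le_compat_l; [apply sqrt_pos|]. apply HLb; auto. all: auto.
Qed.

Lemma field_cont : forall i a p t, (i < N)%nat -> (a < n)%nat -> continuous (fun s => F i a s p) t.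
Proof.
  intros i a p t Hi Ha. unfold F, field.
  apply (cont_sumR n (fun k s => ctrl N n E d om ph h1 h2 i k s p * b i k a)). intros k Hk.
  apply ex_derive_cont. unfold ctrl. auto_derive. auto.
Qed.

End Concrete.

Theorem proposition4p6
  (N n : nat)
  (E : nat -> nat -> bool)
  (HE_range : forall i j, E i j = true -> (i < N)%nat /\ (j < N)%nat)
  (HE_sym : forall i j, E i j = E j i)
  (HE_irrefl : forall i, E i i = false)
  (HE_nonempty : exists i j, E i j = true)
  (d : nat -> nat -> R)
  (Hd_nonneg : forall i j, E i j = true -> 0 <= d i j)
  (Hd_sym : forall i j, E i j = true -> d i j = d j i)
  (b : nat -> nat -> nat -> R)
  (Hb_orthonormal : forall i k l, (i < N)%nat -> (k < n)%nat -> (l < n)%nat ->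
     sumR n (fun a => b i k a * b i l a) = if Nat.eqb k l then 1 else 0)
  (om ph : nat -> nat -> R)
  (Hom_pos : forall i k, (i < N)%nat -> (k < n)%nat -> 0 < om i k)
  (Hom_distinct : forall i k j l, (i < N)%nat -> (k < n)%nat ->
     (j < N)%nat -> (l < n)%nat -> (i, k) <> (j, l) -> om i k <> om j l)
  (h1 h2 : R -> R)
  (Hh1 : admissible_h h1) (Hh2 : admissible_h h2)
  (Hh12 : exists r' c', 0 < r' /\ 0 < c' /\ forall y, 0 < y <= r' ->
     Derive h2 y * h1 y - Derive h1 y * h2 y <= - c' * y) :
  forall (t0 : R) (p0 : config),
  exists p : R -> config,
    is_solution_on N n E d b om ph h1 h2 m_infty p_infty p /\
    (forall i a, (i < N)%nat -> (a < n)%nat -> p t0 i a = p0 i a) /\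
    (forall (lo hi : Rbar) (q : R -> config),
       Rbar_lt lo t0 -> Rbar_lt t0 hi ->
       is_solution_on N n E d b om ph h1 h2 lo hi q ->
       (forall i a, (i < N)%nat -> (a < n)%nat -> q t0 i a = p0 i a) ->
       forall t : R, Rbar_lt lo t -> Rbar_lt t hi ->
       forall i a, (i < N)%nat -> (a < n)%nat -> q t i a = p t i a).
Proof.
  intros t0 p0.
  destruct (field_bound N n E d b om ph h1 h2 Hh1 Hh2) as [Cb [HCb HFb]].
  destruct (ode_global N n (field N n E d b om ph h1 h2) t0 p0 Cb HCb HFb
              (field_lip N n E d b om ph h1 h2 Hh1 Hh2)
              (field_cont N n E d b om ph h1 h2)) as [p [Hd [H0 Hu]]].
  exists p. split; [| split].
  - intros t _ _ i a Hi Ha. apply Hd; auto.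
  - exact H0.
  - intros lo hi q Hlo Hhi Hq Hq0. apply (Hu lo hi q Hlo Hhi); auto.
Qed.
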